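(* Let $n\ge 5$ and $0\le p\le n-2$. Then every simplicial $p$-cycle $c$ (with integer coefficients) in $\Delta_n$ is homologous in $\Delta_n$ to a $p$-cycle $\tilde c$ all of whose simplices lie in $\partial(\Delta_n)$.
   Context: $\mathbb{I}_n$ is the $n$-dimensional hypercube graph on vertex set $\{0,1\}^n$ (adjacent iff differing in exactly one coordinate), with Hamming distance $d(v,w)=\#\{i: v(i)\ne w(i)\}$, $v(i)$ the $i$-th coordinate. $\Delta_n=\mathcal{VR}(\mathbb{I}_n;3)$ is the simplicial complex whose simplices are the subsets $\sigma\subseteq\{0,1\}^n$ with $d(x,y)\le 3$ for all $x,y\in\sigma$. For $i\in[n]$ and $\epsilon\in\{0,1\}$, $\mathbb{I}_n^{(i,\epsilon)}$ is the induced subgraph on $\{v: v(i)=\epsilon\}$ (isomorphic to $\mathbb{I}_{n-1}$), and $\partial(\Delta_n)=\bigcup_{i\in[n],\,\epsilon\in\{0,1\}}\mathcal{VR}(\mathbb{I}_n^{(i,\epsilon)};3)$, i.e. the subcomplex of simplices that do not cover all places (a simplex covers all places if for every $i$ it contains vertices with $i$-th coordinates $0$ and $1$). *)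

(* Defs.v *)
From mathcomp Require Import all_boot all_order all_algebra.
Set Implicit Arguments. Unset Strict Implicit. Unset Printing Implicit Defensive.
Import GRing.Theory Num.Theory.

Definition vert (n : nat) := {ffun 'I_n -> bool}.

(* Hamming distance (= graph distance in I_n) *)
Definition hdist n (v w : vert n) : nat := #|[set i : 'I_n | v i != w i]|.

(* p-simplices of Delta_n = VR(I_n; 3): sets of p+1 vertices of pairwise distance <= 3 *)
Definition is_simplex n (p : nat) (s : {set vert n}) : bool :=
  (#|s| == p.+1) && [forall x in s, forall y in s, hdist x y <= 3].

(* Simplices of VR(I_n^{(i,eps)};3): all vertices have i-th coordinate eps *)
Definition in_face n (s : {set vert n}) : bool :=
  [exists i : 'I_n, exists e : bool, [forall x in s, x i == e]].

(* Orientation: each simplex is oriented by the canonical (enum) order on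
   vertices, i.e. sigma = [x_0 < ... < x_p] with order given by [enum sigma]. *)
Definition chain n := {ffun {set vert n} -> int}.

Definition is_chain n (p : nat) (c : chain n) : Prop :=
  forall s, c s != 0%R -> is_simplex p s.

(* Simplicial boundary (unreduced: the empty set receives no coefficient):
   d[x_0,...,x_p] = sum_i (-1)^i [x_0,..,^x_i,..,x_p]. *)
Definition boundary n (c : chain n) : chain n :=
  [ffun t : {set vert n} =>
     if t == set0 then 0%R else
     (\sum_(s : {set vert n}) c s *
        \sum_(x in s) ((t == s :\ x)%:R * (-1) ^+ (index x (enum s))))%R].

Definition is_cycle n (p : nat) (c : chain n) : Prop :=
  is_chain p c /\ boundary c = 0%R.

Definition homologous n (p : nat) (c c' : chain n) : Prop :=
  exists d : chain n, is_chain p.+1 d /\ (c - c')%R = boundary d.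

(* Main.v *)
Require Import Defs.
From mathcomp Require Import all_boot all_order all_algebra.
From mathcomp Require Import zify.
Import GRing.Theory Num.Theory.
Set Implicit Arguments. Unset Strict Implicit. Unset Printing Implicit Defensive.

Lemma idx_filter (T : eqType) (P : pred T) (l : seq T) x :
  P x -> index x (filter P l) = count P (take (index x l) l).
Proof.
move=> Px; elim: l => [|a l IH] //=.
case: (eqVneq a x) => [eax|nax] /=; first by subst a; rewrite Px /= eqxx.
case Pa: (P a) => /=; by rewrite ?(negbTE nax) IH.
Qed.

Lemma count_D1 (T : finType) (s : {set T}) y (L : seq T) :
  uniq L -> y \in s ->
  count (mem (s :\ y)) L + (y \in L) = count (mem s) L.
Proof.
move=> uL ys; rewrite -(count_uniq_mem y uL).
have := count_predUI (mem (s :\ y)) (pred1 y) L.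
have -> : count (predI (mem (s :\ y)) (pred1 y)) L = 0.
  rewrite (eq_count (a2 := pred0)) ?count_pred0 // => z /=.
  by rewrite !inE; case: eqP; rewrite ?andbF.
rewrite addn0 => <-; apply: eq_count => z; rewrite /= !inE.
case: eqP => [->|]; by rewrite ?ys ?andbT ?andbF ?orbF.
Qed.

Section Sg.
Variable n : nat.
Local Notation E := (Finite.enum (vert n)).

Lemma idx_rank (s : {set vert n}) x : x \in s ->
  index x (enum s) = count (mem s) (take (index x E) E).
Proof. by move=> xs; rewrite /enum_mem idx_filter. Qed.

Lemma idx_D1 (s : {set vert n}) x y : x \in s -> y \in s -> x != y ->
  index x (enum (s :\ y)) + (index y E < index x E) = index x (enum s).
Proof.
move=> xs ys nxy.
rewrite idx_rank; last by rewrite !inE xs andbT.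
rewrite idx_rank // -(@count_D1 _ s y) //; last first.
  by apply: take_uniq; rewrite -enumT enum_uniq.
by rewrite in_take // -enumT mem_enum.
Qed.

Lemma sg_swap (s : {set vert n}) x y : x \in s -> y \in s -> x != y ->
  ((-1) ^+ index x (enum s) * (-1) ^+ index y (enum (s :\ x)) =
  - ((-1) ^+ index y (enum s) * (-1) ^+ index x (enum (s :\ y))) :> int)%R.
Proof.
move=> xs ys nxy.
have h1 := idx_D1 xs ys nxy.
have h2 := idx_D1 ys xs; rewrite eq_sym in h2; have {}h2 := h2 nxy.
have nix : index x E != index y E.
  apply: contra nxy => /eqP h; apply/eqP.
  have hx : x \in E by rewrite -enumT mem_enum.
  have hy : y \in E by rewrite -enumT mem_enum.
  by rewrite -(nth_index x hx) h (nth_index x hy).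
rewrite -!exprD.
case: (ltngtP (index y E) (index x E)) h1 h2 => [lt|lt|eq] h1 h2.
- have -> : (index x (enum s) + index y (enum (s :\ x)) =
     (index y (enum s) + index x (enum (s :\ y))).+1)%N by lia.
  by rewrite exprS mulN1r.
- have -> : (index y (enum s) + index x (enum (s :\ y)) =
     (index x (enum s) + index y (enum (s :\ x))).+1)%N by lia.
  by rewrite exprS mulN1r opprK.
- by rewrite eq eqxx in nix.
Qed.

Lemma inner0 (s u : {set vert n}) :
  (\sum_(x in s) ((-1) ^+ index x (enum s) *
     \sum_(y in s :\ x) ((u == s :\ x :\ y)%:R * (-1) ^+ index y (enum (s :\ x))))
   = 0 :> int)%R.
Proof.
pose F x y : int := (if (x \in s) && (y \in s) && (x != y) then
  (u == s :\ x :\ y)%:R * ((-1) ^+ index x (enum s) * (-1) ^+ index y (enum (s :\ x)))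
  else 0)%R.
have eS : (\sum_(x in s) ((-1) ^+ index x (enum s) *
     \sum_(y in s :\ x) ((u == s :\ x :\ y)%:R * (-1) ^+ index y (enum (s :\ x))))
   = \sum_x \sum_y F x y :> int)%R.
  rewrite big_mkcond; apply: eq_bigr => x _; case xs: (x \in s); last first.
    by rewrite big1 // => y _; rewrite /F xs.
  rewrite mulr_sumr big_mkcond; apply: eq_bigr => y _; rewrite /F xs !inE /=.
  case ys: (y \in s); rewrite ?andbF //= andbT eq_sym.
  by case: (x != y) => //; rewrite mulrCA.
have Fa x y : F y x = (- F x y)%R.
  rewrite /F; case xs: (x \in s); case ys: (y \in s); rewrite /= ?oppr0 //.
  case: (eqVneq x y) => [->|nxy] /=; first by rewrite oppr0.
  rewrite (sg_swap xs ys nxy) mulrN.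
  by rewrite opprK !setDDl [[set y] :|: _]setUC.
rewrite eS; set S := (\sum_x \sum_y F x y)%R.
have : S = (- S)%R.
  rewrite /S {1}exchange_big -sumrN; apply: eq_bigr => x _.
  by rewrite -sumrN; apply: eq_bigr => y _; rewrite Fa.
move=> h; lia.
Qed.

Lemma boundaryK (c : chain n) : boundary (boundary c) = 0%R.
Proof.
apply/ffunP => u; rewrite !ffunE; case: eqP => // /eqP u0.
pose Y (t : {set vert n}) : int :=
  (\sum_(y in t) (u == t :\ y)%:R * (-1) ^+ index y (enum t))%R.
pose X (s t : {set vert n}) : int :=
  (\sum_(x in s) (t == s :\ x)%:R * (-1) ^+ index x (enum s))%R.
transitivity (\sum_t \sum_s c s * (X s t * Y t))%R.
  apply: eq_bigr => t _; rewrite ffunE.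
  case: eqP => [->|_]; last first.
    by rewrite mulr_suml; apply: eq_bigr => s _; rewrite -mulrA.
  by rewrite mul0r big1 // => s _; rewrite /Y big_set0 !mulr0.
rewrite exchange_big /= big1 // => s _.
rewrite -mulr_sumr.
have -> : (\sum_t X s t * Y t = \sum_(x in s) (-1) ^+ index x (enum s) * Y (s :\ x))%R.
  rewrite /X; under eq_bigr do rewrite mulr_suml.
  rewrite exchange_big /=; apply: eq_bigr => x _.
  rewrite (bigD1 (s :\ x)) //= eqxx mul1r big1 ?addr0 //.
  by move=> t /negbTE ->; rewrite !mul0r.
by have := inner0 s u; rewrite /Y /= => ->; rewrite mulr0.
Qed.

End Sg.
Definition Dset n (x y : vert n) : {set 'I_n} := [set i | x i != y i].

Lemma card_le1_eq (T : finType) (A : {set T}) i j :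
  #|A| <= 1 -> i \in A -> j \in A -> i = j.
Proof.
move=> h hi hj; move/card_le1P: h => h.
by have := h i hi j; rewrite hj => /esym/eqP.
Qed.

Lemma lemA n (s : {set vert n}) :
  (forall x y, x \in s -> y \in s -> hdist x y <= 3) -> ~~ in_face s ->
  n <= #|s|.+1.
Proof.
move=> H nf.
case: (set_0Vmem s) => [s0 | [x0 x0s]].
  have [n0|npos] := posnP n; first by move: (n0) => /eqP; lia.
  move: nf; rewrite s0 => nf; exfalso; move/negP: nf; apply.
  apply/existsP; exists (Ordinal npos); apply/existsP; exists true.
  by apply/forallP => x; rewrite in_set0.
pose Df := Dset x0.
case: (@arg_maxnP _ x0 (mem s) (fun y => #|Df y|) x0s) => a aS amax.
have key b : b \in s -> #|Df b :\: Df a| <= 1.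
  move=> bs.
  have h1 : #|(Df b :\: Df a) :|: (Df a :\: Df b)| <= 3.
    apply: leq_trans (H a b aS bs); apply: subset_leq_card.
    apply/subsetP => i; rewrite !inE.
    by case: (x0 i); case: (a i); case: (b i).
  have h0 : (Df b :\: Df a) :&: (Df a :\: Df b) = set0.
    by apply/setP => i; rewrite !inE; case: (x0 i); case: (a i); case: (b i).
  rewrite cardsU h0 cards0 subn0 in h1.
  have h2 := amax b bs.
  have e1 := cardsID (Df a) (Df b).
  have e2 := cardsID (Df b) (Df a).
  rewrite setIC in e2.
  lia.
have cover i : exists2 y, y \in s & i \in Df y.
  case/boolP: [exists y in s, x0 i != y i].
    by case/existsP => y /andP [ys hy]; exists y => //; rewrite inE.
  move=> hne; exfalso; move/negP: nf; apply.
  apply/existsP; exists i; apply/existsP; exists (x0 i).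
  apply/forallP => y; apply/implyP => ys.
  apply/negPn/negP => hy; move/negP: hne; apply; apply/existsP; exists y.
  by rewrite ys eq_sym.
pose bm i := odflt x0 [pick y in s :\ a :\ x0 | i \in Df y].
have bmP i : i \in ~: Df a -> bm i \in s :\ a :\ x0 /\ i \in Df (bm i).
  rewrite inE => ia; rewrite /bm; case: pickP => [y /andP [] //|].
  move=> hn; exfalso; case: (cover i) => y ys; rewrite inE => iy.
  move: ia; rewrite inE => ia.
  move: (hn y); rewrite !inE ys andbT iy.
  have -> : y != x0 by apply/eqP => e; move: iy; rewrite e eqxx.
  have -> : y != a by apply/eqP => e; move: iy ia; rewrite e => ->.
  by [].
have inj : {in ~: Df a &, injective bm}.
  move=> i j hi hj e.
  have [b1 i1] := bmP i hi; have [b2 j1] := bmP j hj.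
  rewrite -e in j1.
  have bs : bm i \in s by move: b1; rewrite !inE => /andP [_ /andP [_ ->]].
  move: hi hj; rewrite !in_setC => hi hj.
  by apply: (card_le1_eq (key _ bs)); rewrite inE ?i1 ?j1 ?hi ?hj.
have cU : #|~: Df a| <= #|s :\ a :\ x0|.
  rewrite -(card_in_imset inj); apply: subset_leq_card.
  by apply/subsetP => y /imsetP [i hi ->]; case: (bmP i hi).
have cT := cardsC (Df a); rewrite card_ord in cT.
have da : #|Df a| <= 3 by apply: H.
case: (eqVneq a x0) => [ea | nea].
  have : #|Df a| = 0 by apply: eq_card0 => i; rewrite ea inE eqxx.
  have := subset_leq_card (subsetDl (s :\ a) [set x0]).
  have := subset_leq_card (subsetDl s [set a]).
  lia.
have e1 := cardsD1 a s; have e2 := cardsD1 x0 (s :\ a).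
have aS2 : a \in s := aS.
rewrite aS2 in e1; rewrite !inE eq_sym nea x0s in e2.
lia.
Qed.

Lemma boundaryB n (c e : chain n) : boundary (c - e)%R = (boundary c - boundary e)%R.
Proof.
apply/ffunP => t; rewrite !ffunE; case: eqP => _; first by rewrite subrr.
rewrite -sumrB; apply: eq_bigr => s _; by rewrite !ffunE mulrBl.
Qed.

Lemma boundary0 n : boundary (0%R : chain n) = 0%R.
Proof.
apply/ffunP => t; rewrite !ffunE; case: eqP => // _.
by rewrite big1 // => s _; rewrite ffunE mul0r.
Qed.

Lemma hdist_sym n (x y : vert n) : hdist x y = hdist y x.
Proof. by apply: eq_card => i; rewrite !inE eq_sym. Qed.

Lemma hdist0 n (x : vert n) : hdist x x = 0.
Proof. by apply: eq_card0 => i; rewrite !inE eqxx. Qed.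

Lemma chain_sub n q (c e : chain n) : is_chain q c -> is_chain q e ->
  is_chain q (c - e)%R.
Proof.
move=> hc he s; rewrite !ffunE.
case: (eqVneq (c s) 0%R) => [->|]; last by move/hc.
case: (eqVneq (e s) 0%R) => [->|]; last by move/he.
by rewrite subrr eqxx.
Qed.

Lemma simplex_sub n q (s t : {set vert n}) : is_simplex q s -> t \subset s ->
  (forall x y, x \in t -> y \in t -> hdist x y <= 3).
Proof.
move=> /andP [_ /forallP h] /subsetP ts x y xt yt.
move: (h x) => /implyP /(_ (ts _ xt)) /forallP /(_ y) /implyP; apply; exact: ts.
Qed.

Lemma chain_boundary n q (e : chain n) : is_chain q.+1 e -> is_chain q (boundary e).
Proof.
move=> he t; rewrite ffunE; case: (eqVneq t set0) => [->|tn]; first by rewrite eqxx.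
case: (boolP [exists s, exists x, (e s != 0%R) && (x \in s) && (t == s :\ x)]).
  case/existsP => s /existsP [x /andP [/andP [es xs] /eqP ->]].
  move=> _; have /andP [/eqP cs _] := he _ es.
  apply/andP; split.
    by move: (cardsD1 x s); rewrite xs cs add1n => [[<-]].
  apply/forallP => y; apply/implyP => ys; apply/forallP => z; apply/implyP => zs.
  by apply: (simplex_sub (he _ es) (subsetDl s [set x])).
move=> hn; rewrite big1 ?eqxx // => s _.
case: (eqVneq (e s) 0%R) => [->|es]; first by rewrite mul0r.
rewrite big1 ?mulr0 // => x xs.
case: (eqVneq t (s :\ x)) => [et|]; last by rewrite mul0r.
exfalso; move/negP: hn; apply; apply/existsP; exists s; apply/existsP; exists x.
by rewrite es xs et eqxx.
Qed.

Definition priv n (s : {set vert n}) (y : vert n) (i : 'I_n) : bool :=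
  [forall z in s, (z != y) ==> (z i != y i)].

Definition wv n (s : {set vert n}) : vert n :=
  [ffun i => [exists y in s, priv s y i && ~~ y i]].

Lemma priv_uniq n (s : {set vert n}) y y' i : 3 <= #|s| ->
  y \in s -> y' \in s -> priv s y i -> priv s y' i -> y = y'.
Proof.
move=> s3 ys ys' py py'; apply/eqP/negPn/negP => ne.
have : 0 < #|s :\ y :\ y'|.
  move: (cardsD1 y s) (cardsD1 y' (s :\ y)); rewrite ys !inE ys' eq_sym ne /=.
  move=> h1 h2; rewrite lt0n; apply/eqP => h0; move: s3; by rewrite h1 h2 h0.
move/card_gt0P => [z]; rewrite !inE => /andP [zy' /andP [zy zs]].
move: (py) => /forallP /(_ z) /implyP /(_ zs) /implyP /(_ zy).
move: (py') => /forallP /(_ z) /implyP /(_ zs) /implyP /(_ zy').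
move: (py) => /forallP /(_ y') /implyP /(_ ys') /implyP.
rewrite eq_sym ne => /(_ isT).
by case: (z i); case: (y i); case: (y' i).
Qed.

Lemma w_priv n (s : {set vert n}) y i : 3 <= #|s| -> y \in s -> priv s y i ->
  wv s i = ~~ y i.
Proof.
move=> s3 ys py; rewrite ffunE.
case yi: (y i) => /=.
  apply/negbTE/negP => /existsP [y' /andP [ys' /andP [py' ny']]].
  have ee := priv_uniq s3 ys ys' py py'.
  by move: ny'; rewrite -ee yi.
by apply/existsP; exists y; rewrite ys py yi.
Qed.

Lemma exists_priv n (s : {set vert n}) y :
  (forall x y, x \in s -> y \in s -> hdist x y <= 3) -> ~~ in_face s ->
  #|s| = n.-1 -> 2 < n -> y \in s -> exists i, priv s y i.
Proof.
move=> H nf cs n2 ys.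
case: (boolP [exists i, priv s y i]); first by move/existsP.
move=> hn; exfalso.
have nf' : ~~ in_face (s :\ y).
  apply/negP => /existsP [i /existsP [e /forallP he]].
  move/negP: hn; apply; apply/existsP; exists i.
  have yie : y i != e.
    apply/negP => /eqP yie; move/negP: nf; apply; apply/existsP; exists i.
    apply/existsP; exists e; apply/forallP => z; apply/implyP => zs.
    case: (eqVneq z y) => [->|zy]; first by rewrite yie.
    by move: (he z) => /implyP; apply; rewrite !inE zy zs.
  apply/forallP => z; apply/implyP => zs; apply/implyP => zy.
  move: (he z) => /implyP; rewrite !inE zy zs => /(_ isT) /eqP ->.
  by rewrite eq_sym.
have := lemA (fun x z xs zs => H x z (subsetP (subsetDl s [set y]) x xs)
   (subsetP (subsetDl s [set y]) z zs)) nf'.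
move: (cardsD1 y s); rewrite ys cs; lia.
Qed.

Section W.
Variables (n : nat) (s : {set vert n}).
Hypotheses (H : forall x y, x \in s -> y \in s -> hdist x y <= 3)
  (nf : ~~ in_face s) (cs : #|s| = n.-1) (n5 : 4 < n).

Let s3 : 3 <= #|s|. Proof. rewrite cs; lia. Qed.
Let i0 : 'I_n := Ordinal (leq_trans (isT : 0 < 5) n5).
Let pc z := odflt i0 [pick i | priv s z i].
Let pcP z : z \in s -> priv s z (pc z).
Proof.
move=> zs; rewrite /pc; case: pickP => // hn.
have [i pi] := exists_priv H nf cs (leq_trans (isT : 2 < 5) n5) zs.
by move: (hn i); rewrite pi.
Qed.

Lemma w_dist y : y \in s -> hdist (wv s) y <= 3.
Proof.
move=> ys.
have inj : {in s :\ y &, injective pc}.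
  move=> z z' /setD1P [_ zs] /setD1P [_ zs'] e.
  by apply: (priv_uniq s3 zs zs' (pcP zs)); rewrite e; apply: pcP.
have disj : [set i | wv s i != y i] :&: (pc @: (s :\ y)) = set0.
  apply/setP => i; rewrite !inE; apply/negbTE/negP => /andP [hw /imsetP [z hz ei]].
  move: hz => /setD1P [zy zs]; subst i.
  rewrite (w_priv s3 zs (pcP zs)) in hw.
  move: (pcP zs) => /forallP /(_ y) /implyP /(_ ys) /implyP.
  rewrite eq_sym zy => /(_ isT).
  by move: hw; case: (y (pc z)); case: (z (pc z)).
have := cardsU [set i | wv s i != y i] (pc @: (s :\ y)).
rewrite disj cards0 subn0 (card_in_imset inj) => e.
have := subset_leq_card (subsetT ([set i | wv s i != y i] :|: pc @: (s :\ y))).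
rewrite e cardsT card_ord.
move: (cardsD1 y s); rewrite ys cs /= => h1 h2.
rewrite /hdist.
have h0 : n = n.-1.+1 by rewrite prednK // (leq_trans _ n5).
rewrite h1 in h0.
move: h0 h2; set a := #|[set i | wv s i != y i]|; set b := #|s :\ y|.
lia.
Qed.

Lemma w_notin : wv s \notin s.
Proof.
apply/negP => ws.
have := w_priv s3 ws (pcP ws).
by case: (wv s (pc (wv s))).
Qed.

Lemma tau_face y : y \in s -> in_face ((wv s |: s) :\ y).
Proof.
move=> ys; apply/existsP; exists (pc y); apply/existsP; exists (~~ y (pc y)).
apply/forallP => x; apply/implyP; rewrite !inE => /andP [xy /orP [/eqP ->|xs]].
  by rewrite (w_priv s3 ys (pcP ys)).
move: (pcP ys) => /forallP /(_ x) /implyP /(_ xs) /implyP /(_ xy).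
by case: (x (pc y)); case: (y (pc y)).
Qed.

Lemma tau_simplex : is_simplex n.-1 (wv s |: s).
Proof.
apply/andP; split.
  rewrite cardsU1 w_notin cs; apply/eqP; lia.
apply/forallP => x; apply/implyP; rewrite !inE => hx.
apply/forallP => z; apply/implyP; rewrite !inE => hz.
case/orP: hx => [/eqP ->|xs]; case/orP: hz => [/eqP ->|zs].
- by rewrite hdist0.
- exact: w_dist.
- by rewrite hdist_sym; apply: w_dist.
- exact: H.
Qed.

End W.

Lemma sign_sq (k : nat) : ((-1) ^+ k * (-1) ^+ k = 1 :> int)%R.
Proof. by rewrite -exprD -signr_odd oddD addbb expr0. Qed.

Theorem mainTheorem16 (n p : nat) (c : chain n) :
  5 <= n -> p <= n - 2 -> is_cycle p c ->
  exists c' : chain n,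
    [/\ is_cycle p c', homologous p c c' &
        forall s, c' s != 0%R -> in_face s].
Proof.
move=> n5 pn [cc bc].
case: (ltnP p (n - 2)) => [plt | pge].
  exists c; split => //.
    exists 0%R; split; first by move=> s; rewrite ffunE eqxx.
    by rewrite subrr boundary0.
  move=> s /cc hs; case: (boolP (in_face s)) => // nf; exfalso.
  have := lemA (simplex_sub hs (subxx s)) nf.
  by move: hs => /andP [/eqP -> _]; lia.
have hp : p.+1 = n.-1 by lia.
pose cov (s : {set vert n}) := is_simplex p s && ~~ in_face s.
have covH (s : {set vert n}) : cov s -> [/\ (forall x y, x \in s -> y \in s -> hdist x y <= 3),
   ~~ in_face s & #|s| = n.-1].
  move=> /andP [hs nf]; split => //; first exact: simplex_sub hs (subxx s).
  by move: hs => /andP [/eqP -> _].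
have n4 : 4 < n by [].
pose sgw (s : {set vert n}) : int := ((-1) ^+ index (wv s) (enum (wv s |: s)))%R.
pose d : chain n := [ffun t : {set vert n} => (\sum_s ((cov s && (wv s |: s == t))%:R * (c s * sgw s)) : int)%R].
have dch : is_chain p.+1 d.
  move=> t; rewrite ffunE => hn.
  case: (boolP [exists s, cov s && (wv s |: s == t)]).
    case/existsP => s /andP [cs /eqP <-]; rewrite hp.
    by case: (covH s cs) => H nf css; apply: tau_simplex.
  move=> hn'; move: hn; rewrite big1 ?eqxx // => s _.
  case: (boolP (cov s && (wv s |: s == t))) => [h|]; last by rewrite mul0r.
  by exfalso; move/negP: hn'; apply; apply/existsP; exists s.
have key t : ~~ in_face t -> boundary d t = ((cov t)%:R * c t)%R.
  move=> nft; rewrite ffunE.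
  have -> : (t == set0) = false.
    apply/negbTE/negP => /eqP et; move/negP: nft; apply; rewrite et.
    apply/existsP; exists (Ordinal (leq_trans (isT : 0 < 5) n5)); apply/existsP; exists true.
    by apply/forallP => x; rewrite in_set0.
  pose Y (u : {set vert n}) : int :=
    (\sum_(x in u) (t == u :\ x)%:R * (-1) ^+ index x (enum u))%R.
  have Yt s : cov s -> Y (wv s |: s) = ((t == s)%:R * sgw s)%R.
    move=> cs; case: (covH s cs) => H nf css.
    have wn := w_notin H nf css n4.
    rewrite /Y (bigD1 (wv s)) ?setU11 //= setU1K // big1 ?addr0 // => x /andP [xt xw].
    have xs : x \in s by case/setU1P: xt => // e; rewrite e eqxx in xw.
    case: (eqVneq t ((wv s |: s) :\ x)) => [et|]; last by rewrite mul0r.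
    by move/negP: nft; rewrite et; case; apply: tau_face.
  transitivity (\sum_s ((cov s)%:R * (c s * sgw s)) * Y (wv s |: s))%R.
    under eq_bigr => u _ do rewrite ffunE mulr_suml.
    rewrite exchange_big /=; apply: eq_bigr => s _.
    rewrite (bigD1 (wv s |: s)) //= eqxx andbT addrC big1 ?add0r //.
    by move=> u /negbTE un; rewrite eq_sym un andbF !mul0r.
  rewrite (bigD1 t) //= big1 ?addr0.
    case ct: (cov t); last by rewrite !mul0r.
    by rewrite (Yt _ ct) eqxx mul1r !mul1r -mulrA sign_sq mulr1.
  move=> s /negbTE st; case cs: (cov s); last by rewrite !mul0r.
  by rewrite (Yt _ cs) eq_sym st !mul0r mulr0.
exists (c - boundary d)%R; split.
- split; first exact: chain_sub cc (chain_boundary dch).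
  by rewrite boundaryB bc boundaryK subrr.
- exists d; split => //.
  by rewrite opprB addrC subrK.
- move=> t; rewrite ffunE; case: (boolP (in_face t)) => // nft.
  rewrite ffunE key //; case ct: (cov t); first by rewrite mul1r subrr eqxx.
  case: (eqVneq (c t) 0%R) => [->|ne]; first by rewrite mul0r subrr eqxx.
  by move: ct; rewrite /cov (cc t ne) nft.
Qed.
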